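(* A $k$-layer partially input convex neural network (PICNN), as defined below, can represent any $k$-layer fully input convex neural network (FICNN), and any purely feedforward network with $k$ layers (the latter viewed as the energy function $(x,y)\mapsto \hat f(x;\theta)^T y$).
   Context: A $k$-layer FICNN over $y\in\mathbb{R}^p$ is $f(y;\theta)=z_k$ where $z_{i+1} = g_i(W^{(z)}_i z_i + W^{(y)}_i y + b_i)$ for $i=0,\ldots,k-1$, with $z_0 \equiv 0$, $W^{(z)}_0\equiv 0$, $W^{(z)}_{1:k-1}$ entrywise non-negative and $g_i$ convex non-decreasing activations. A $k$-layer PICNN over pairs $(x,y)$ is $f(x,y;\theta)=z_k$ defined by $u_0 = x$, $$u_{i+1} = \tilde g_i(\tilde W_i u_i + \tilde b_i),$$ $$z_{i+1} = g_i\Big( W^{(z)}_i\big(z_i \circ [W^{(zu)}_i u_i + b^{(z)}_i]_+\big) + W^{(y)}_i\big(y\circ(W^{(yu)}_i u_i + b^{(y)}_i)\big) + W^{(u)}_i u_i + b_i\Big),$$ for $i=0,\ldots,k-1$, where $\circ$ is the elementwise (Hadamard) product, $[\cdot]_+ = \max(\cdot,0)$ elementwise, only the $W^{(z)}_i$ are required to be entrywise non-negative, $g_i$ are convex non-decreasing activations, and $\tilde g_i$ are arbitrary activations. A purely feedforward network $\hat f: \mathcal{X}\to\mathcal{Y}$ with $k$ layers is identified with the energy function $f(x,y) = \hat f(x;\theta)^T y$. ''Can represent'' means there exist PICNN parameters such that the PICNN function coincides with the given function. *)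

(* Defs.v *)
From HB Require Import structures.
From mathcomp Require Import all_boot all_order all_algebra.
From mathcomp Require Import reals.
Set Implicit Arguments. Unset Strict Implicit. Unset Printing Implicit Defensive.
Import Order.TTheory GRing.Theory Num.Theory.
Local Open Scope ring_scope.

Section Nets.
Variable R : realType.

Definition act (g : R -> R) {m} (v : 'cV[R]_m) : 'cV[R]_m := map_mx g v.
Definition had {m} (u v : 'cV[R]_m) : 'cV[R]_m := \col_i (u i 0 * v i 0).
Definition pos_part {m} (v : 'cV[R]_m) : 'cV[R]_m := map_mx (fun t => Num.max t 0) v.

Definition nonneg_mx {m n} (M : 'M[R]_(m, n)) : Prop := forall i j, 0 <= M i j.
Definition convex_fun (g : R -> R) : Prop :=
  forall a b t, 0 <= t <= 1 -> g (t * a + (1 - t) * b) <= t * g a + (1 - t) * g b.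
Definition nondecreasing_fun (g : R -> R) : Prop := forall a b, a <= b -> g a <= g b.

(** Layer widths: [zd zw i] is the width of z_i (z_0 = 0 has width 0, so
    W^{(z)}_0 z_0 = 0 automatically); [ud d uw i] the width of u_i, u_0 = x. *)
Definition zd (zw : nat -> nat) (i : nat) : nat := if i is j.+1 then zw j else 0%N.
Definition ud (d : nat) (uw : nat -> nat) (i : nat) : nat :=
  if i is j.+1 then uw j else d.

Record ficnn (p : nat) (zw : nat -> nat) := Ficnn {
  fWz : forall i, 'M[R]_(zw i, zd zw i);
  fWy : forall i, 'M[R]_(zw i, p);
  fb  : forall i, 'cV[R]_(zw i);
  fg  : nat -> R -> R }.

Fixpoint ficnn_z p zw (F : ficnn p zw) (y : 'cV[R]_p) (i : nat) : 'cV[R]_(zd zw i) :=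
  match i return 'cV[R]_(zd zw i) with
  | 0 => 0
  | j.+1 => act (fg F j) (fWz F j *m ficnn_z F y j + fWy F j *m y + fb F j)
  end.

Definition ficnn_eval p zw (F : ficnn p zw) (k : nat) (y : 'cV[R]_p) := ficnn_z F y k.

Definition ficnn_ok p zw (F : ficnn p zw) (k : nat) : Prop :=
  (forall i, (0 < i < k)%N -> nonneg_mx (fWz F i)) /\
  (forall i, (i < k)%N -> convex_fun (fg F i) /\ nondecreasing_fun (fg F i)).

Record picnn (d p : nat) (uw zw : nat -> nat) := Picnn {
  pWt  : forall i, 'M[R]_(uw i, ud d uw i);
  pbt  : forall i, 'cV[R]_(uw i);
  pgt  : nat -> R -> R;
  pWz  : forall i, 'M[R]_(zw i, zd zw i);
  pWzu : forall i, 'M[R]_(zd zw i, ud d uw i);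
  pbz  : forall i, 'cV[R]_(zd zw i);
  pWy  : forall i, 'M[R]_(zw i, p);
  pWyu : forall i, 'M[R]_(p, ud d uw i);
  pby  : nat -> 'cV[R]_p;
  pWu  : forall i, 'M[R]_(zw i, ud d uw i);
  pb   : forall i, 'cV[R]_(zw i);
  pg   : nat -> R -> R }.

Fixpoint picnn_u d p uw zw (N : picnn d p uw zw) (x : 'cV[R]_d) (i : nat)
  : 'cV[R]_(ud d uw i) :=
  match i return 'cV[R]_(ud d uw i) with
  | 0 => x
  | j.+1 => act (pgt N j) (pWt N j *m picnn_u N x j + pbt N j)
  end.

Fixpoint picnn_z d p uw zw (N : picnn d p uw zw) (x : 'cV[R]_d) (y : 'cV[R]_p)
  (i : nat) : 'cV[R]_(zd zw i) :=
  match i return 'cV[R]_(zd zw i) with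
  | 0 => 0
  | j.+1 =>
    let u := picnn_u N x j in
    act (pg N j)
      (pWz N j *m had (picnn_z N x y j) (pos_part (pWzu N j *m u + pbz N j))
       + pWy N j *m had y (pWyu N j *m u + pby N j)
       + pWu N j *m u + pb N j)
  end.

Definition picnn_eval d p uw zw (N : picnn d p uw zw) (k : nat) x y := picnn_z N x y k.

Definition picnn_ok d p uw zw (N : picnn d p uw zw) (k : nat) : Prop :=
  (forall i, (i < k)%N -> nonneg_mx (pWz N i)) /\
  (forall i, (i < k)%N -> convex_fun (pg N i) /\ nondecreasing_fun (pg N i)).

(** ---- Purely feedforward network hat f : R^d -> R^p with n.+1 layers:
    hidden layers u_{i+1} = tilde g_i (W_i u_i + b_i) for i < n, u_0 = x,
    and an affine output layer hat f(x) = W_n u_n + b_n. ---- *)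
Record ffnet (d p : nat) (uw : nat -> nat) (n : nat) := Ffnet {
  hW : forall i, 'M[R]_(uw i, ud d uw i);
  hb : forall i, 'cV[R]_(uw i);
  hg : nat -> R -> R;
  hWout : 'M[R]_(p, ud d uw n);
  hbout : 'cV[R]_p }.

Fixpoint ffnet_u d p uw n (G : ffnet d p uw n) (x : 'cV[R]_d) (i : nat)
  : 'cV[R]_(ud d uw i) :=
  match i return 'cV[R]_(ud d uw i) with
  | 0 => x
  | j.+1 => act (hg G j) (hW G j *m ffnet_u G x j + hb G j)
  end.

Definition ffnet_eval d p uw n (G : ffnet d p uw n) (x : 'cV[R]_d) : 'cV[R]_p :=
  hWout G *m ffnet_u G x n + hbout G.

End Nets.

(* Main.v *)
Require Import Defs.
From HB Require Import structures.
From mathcomp Require Import all_boot all_order all_algebra.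
From mathcomp Require Import reals.
Import Order.TTheory GRing.Theory Num.Theory.
Local Open Scope ring_scope.

Lemma had_one (R : realType) m k (v : 'cV[R]_m) (u : 'cV[R]_k) :
  had v (0 *m u + const_mx 1) = v.
Proof. by apply/matrixP => a b; rewrite mul0mx add0r !mxE mulr1 (ord1 b). Qed.

Lemma had_pos_one (R : realType) m k (v : 'cV[R]_m) (u : 'cV[R]_k) :
  had v (pos_part (0 *m u + const_mx 1)) = v.
Proof.
apply/matrixP => a b; rewrite mul0mx add0r !mxE (ord1 b).
by rewrite /Num.max ltr10 mulr1.
Qed.

Definition pickW (R : realType) d p (uw : nat -> nat) n (W : 'M[R]_(p, ud d uw n)) i
  : 'M[R]_(p, ud d uw i) :=
  match decP (@eqnP n i) with
  | left e => eq_rect n (fun j => 'M[R]_(p, ud d uw j)) W i e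
  | right _ => 0
  end.

Lemma pickW_n (R : realType) d p uw n (W : 'M[R]_(p, ud d uw n)) :
  @pickW R d p uw n W n = W.
Proof.
rewrite /pickW; case: (decP (@eqnP n n)) => [e|//].
by by rewrite (eq_axiomK e).
Qed.

Theorem proposition2 (R : realType) (d p n : nat) :
  (forall (zw : nat -> nat) (F : ficnn R p zw),
     ficnn_ok F n.+1 ->
     exists (uw : nat -> nat) (N : picnn R d p uw zw),
       picnn_ok N n.+1 /\
       forall (x : 'cV[R]_d) (y : 'cV[R]_p),
         picnn_eval N n.+1 x y = ficnn_eval F n.+1 y)
  /\
  (forall (uw : nat -> nat) (G : ffnet R d p uw n),
     exists N : picnn R d p uw (fun _ => 1%N),
       picnn_ok N n.+1 /\
       forall (x : 'cV[R]_d) (y : 'cV[R]_p),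
         picnn_eval N n.+1 x y = (ffnet_eval G x)^T *m y).
Proof.
split.
- move=> zw F [Hz Hg].
  exists (fun _ => 0%N).
  exists (@Picnn R d p (fun _ => 0%N) zw (fun i => 0) (fun i => 0) (fun _ t => t)
    (fWz F) (fun i => 0) (fun i => const_mx 1) (fWy F) (fun i => 0)
    (fun i => const_mx 1) (fun i => 0) (fb F) (fg F)).
  split.
  + split => //= i Hi.
    case: i Hi => [|i] Hi; first by move=> a [].
    by apply: Hz.
  + move=> x y; rewrite /picnn_eval /ficnn_eval.
    elim: n.+1 => [//|j IH] /=.
    by rewrite had_pos_one had_one IH mul0mx addr0.
- move=> uw G.
  exists (@Picnn R d p uw (fun _ => 1%N) (hW G) (hb G) (hg G)
    (fun i => 0) (fun i => 0) (fun i => 0) (fun i => const_mx 1)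
    (@pickW R d p uw n (hWout G)) (fun _ => hbout G) (fun i => 0) (fun i => 0) (fun _ t => t)).
  split.
  + split => i Hi; first by move=> a b; rewrite mxE.
    split; first by move=> a b t _; rewrite lexx.
    by move=> a b.
  + move=> x y.
    have Hu : forall i, picnn_u (@Picnn R d p uw (fun _ => 1%N) (hW G) (hb G) (hg G)
      (fun i => 0) (fun i => 0) (fun i => 0) (fun i => const_mx 1)
      (@pickW R d p uw n (hWout G)) (fun _ => hbout G) (fun i => 0) (fun i => 0) (fun _ t => t)) x i
      = ffnet_u G x i.
      by elim => [//|i IH] /=; rewrite IH.
    rewrite /picnn_eval /= Hu pickW_n /ffnet_eval.
    apply/matrixP => a b; rewrite (ord1 a) (ord1 b) !mxE.
    idtac.
    rewrite [X in X + _ + _ + _]big1; last by move=> j _; rewrite mxE mul0r.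
    rewrite [X in _ + _ + X + _]big1; last by move=> j _; rewrite mxE mul0r.
    rewrite add0r !addr0.
    apply: eq_bigr => j _; rewrite !mxE mul1r mulrC.
    reflexivity.
Qed.
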